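(* There exists a diameter-perfect code of minimum distance $2r$ in $(\mathbb Z^m,d_a)$ in each of the following cases: (i) $m\in\{1,2\}$ and $r\ge1$ arbitrary; (ii) $m\ge3$ and $r=1$.
   Context: $d_a(\mathbf x,\mathbf y)=\max\{\sum_{i:x_i>y_i}(x_i-y_i),\sum_{i:x_i<y_i}(y_i-x_i)\}$ on $\mathbb Z^m$; the minimum distance $d_a(\mathcal C)$ of a code is the minimum distance between distinct codewords. An anticode of diameter $D$ is a subset of $\mathbb Z^m$ whose points are pairwise at $d_a$-distance at most $D$. The density of $\mathcal C$ is $\mu(\mathcal C)=\lim_{k\to\infty}|\mathcal C\cap\{-k,\dots,k\}^m|/(2k+1)^m$. A code $\mathcal C$ with minimum distance $d$ is diameter-perfect if its density exists and there is a finite anticode $S$ of diameter $d-1$ with $\mu(\mathcal C)\cdot|S|=1$. *)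

(* Defs.v *)
From Stdlib Require Import Reals ZArith List Classical ClassicalEpsilon.
Import ListNotations.
Open Scope Z_scope.

Definition point (m : nat) (x : list Z) : Prop := length x = m.

Fixpoint pos_sum (x y : list Z) : Z :=
  match x, y with
  | a :: x', b :: y' => Z.max (a - b) 0 + pos_sum x' y'
  | _, _ => 0
  end.

(* Asymmetric (l_1-type) distance d_a(x,y) = max{ sum_{x_i>y_i}(x_i-y_i),
   sum_{x_i<y_i}(y_i-x_i) }. *)
Definition da (x y : list Z) : Z := Z.max (pos_sum x y) (pos_sum y x).

Definition is_code (m : nat) (C : list Z -> Prop) : Prop :=
  forall x, C x -> point m x.

Definition min_dist (C : list Z -> Prop) (d : Z) : Prop :=
  (exists x y, C x /\ C y /\ x <> y /\ da x y = d) /\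
  (forall x y, C x -> C y -> x <> y -> d <= da x y).

Definition finite_anticode (m : nat) (S : list (list Z)) (D : Z) : Prop :=
  NoDup S /\ (forall x, In x S -> point m x) /\
  (forall x y, In x S -> In y S -> da x y <= D).

Definition interval (k : nat) : list Z :=
  map (fun i => Z.of_nat i - Z.of_nat k) (seq 0 (2 * k + 1)).

Fixpoint box (m k : nat) : list (list Z) :=
  match m with
  | O => [ [] ]
  | S m' => flat_map (fun z => map (cons z) (box m' k)) (interval k)
  end.

Definition count_in_box (m : nat) (C : list Z -> Prop) (k : nat) : nat :=
  length (filter (fun x => if excluded_middle_informative (C x) then true else false)
                 (box m k)).

Definition has_density (m : nat) (C : list Z -> Prop) (mu : R) : Prop :=
  Un_cv (fun k => (INR (count_in_box m C k) / INR ((2 * k + 1) ^ m))%R) mu.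

Definition diameter_perfect (m : nat) (C : list Z -> Prop) (d : Z) : Prop :=
  is_code m C /\ min_dist C d /\
  exists mu : R, has_density m C mu /\
    exists S, finite_anticode m S (d - 1) /\ (mu * INR (length S) = 1)%R.

(* Main.v *)
Require Import Defs.
From Stdlib Require Import Reals ZArith List.
From Stdlib Require Import Lia Lra Psatz Classical ClassicalEpsilon.
Import ListNotations.
Open Scope Z_scope.

Open Scope R_scope.
Lemma real_core (c tc D L Nr nu eps : R) :
  0 < D -> 1 <= L -> 1 <= Nr -> 0 <= tc <= D ->
  (L - Nr) * tc <= Nr * c <= (L + Nr) * tc ->
  Rabs (tc / D - nu) < eps / 2 -> 1 / L < eps / 2 ->
  Rabs (c / (L * D) - nu / Nr) < eps.
Proof.
  intros HD HL HN Htc Hc Ha Hl.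
  set (a := tc / D). set (b := c / D).
  assert (Ea : tc = a * D) by (unfold a; field; lra).
  assert (Eb : c = b * D) by (unfold b; field; lra).
  assert (0 <= a <= 1).
  { split. unfold a. apply Rmult_le_pos; [lra|]. left; apply Rinv_0_lt_compat; lra.
    apply (Rmult_le_reg_r D); [lra|]. rewrite <- Ea. lra. }
  assert (Hb : (L - Nr) * a <= Nr * b <= (L + Nr) * a).
  { rewrite Ea, Eb in Hc. split; apply (Rmult_le_reg_r D); try lra; nra. }
  replace (c / (L * D) - nu / Nr) with ((Nr * b - L * a) * (/ L) * (/ Nr) + (a - nu) * / Nr)
    by (unfold b, a; field; repeat split; lra).
  assert (0 < / L) by (apply Rinv_0_lt_compat; lra).
  assert (0 < / Nr) by (apply Rinv_0_lt_compat; lra).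
  assert (L * / L = 1) by (field; lra).
  assert (Nr * / Nr = 1) by (field; lra).
  assert (/ Nr <= 1) by (rewrite <- Rinv_1; apply Rinv_le_contravar; lra).
  assert (/ L < eps / 2) by (unfold Rdiv in Hl; lra).
  apply Rabs_def2 in Ha.
  assert (Rabs ((Nr * b - L * a) * / L * / Nr) <= / L).
  { apply Rabs_le. set (X := Nr * b - L * a).
    assert (- Nr <= X <= Nr) by (unfold X; split; nra).
    assert (- 1 <= X * / Nr <= 1) by (split; nra).
    replace (X * / L * / Nr) with ((X * / Nr) * / L) by ring.
    split; nra. }
  assert (Rabs ((a - nu) * / Nr) < eps / 2).
  { rewrite Rabs_mult, (Rabs_right (/ Nr)) by lra.
    assert (Rabs (a - nu) < eps / 2) by (apply Rabs_def1; fold a in Ha; lra).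
    nra. }
  pose proof (Rabs_triang ((Nr * b - L * a) * / L * / Nr) ((a - nu) * / Nr)). lra.
Qed.

Open Scope Z_scope.

Fixpoint sumN {A} (l : list A) (g : A -> nat) : nat :=
  match l with [] => 0%nat | a :: l' => (g a + sumN l' g)%nat end.

Definition indP (P : list Z -> Prop) (x : list Z) : nat :=
  if excluded_middle_informative (P x) then 1%nat else 0%nat.

Lemma sumN_app {A} (l1 l2 : list A) g : sumN (l1 ++ l2) g = (sumN l1 g + sumN l2 g)%nat.
Proof. induction l1; simpl; lia. Qed.

Lemma sumN_ext {A} (l : list A) g h : (forall a, g a = h a) -> sumN l g = sumN l h.
Proof. intros H; induction l; simpl; auto. Qed.

Lemma sumN_plus {A} (l : list A) g h : sumN l (fun a => g a + h a)%nat = (sumN l g + sumN l h)%nat.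
Proof. induction l; simpl; lia. Qed.

Lemma sumN_mul {A} (l : list A) c g : sumN l (fun a => c * g a)%nat = (c * sumN l g)%nat.
Proof. induction l; simpl; lia. Qed.

Lemma sumN_swap {A B} (l1 : list A) (l2 : list B) g :
  sumN l1 (fun a => sumN l2 (fun b => g a b)) = sumN l2 (fun b => sumN l1 (fun a => g a b)).
Proof.
  induction l1; simpl.
  - induction l2; simpl; auto.
  - rewrite IHl1. rewrite <- sumN_plus. reflexivity.
Qed.

Lemma count_eq m C k : count_in_box m C k = sumN (box m k) (indP C).
Proof.
  unfold count_in_box. induction (box m k); simpl; auto.
  unfold indP at 1. destruct excluded_middle_informative; simpl; lia.
Qed.

Lemma sumN_flat2 (I : list Z) (L : list (list Z)) g :
  sumN (flat_map (fun z => map (cons z) L) I) g = sumN I (fun z => sumN L (fun t => g (z :: t))).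
Proof.
  induction I; simpl; auto. rewrite sumN_app, IHI. f_equal.
  clear IHI. induction L; simpl; auto.
Qed.

Lemma sumN_le_len {A} (l : list A) g : (forall a, (g a <= 1)%nat) -> (sumN l g <= length l)%nat.
Proof. intros H; induction l; simpl; auto. specialize (H a); lia. Qed.

Lemma box_length m k : length (box m k) = ((2 * k + 1) ^ m)%nat.
Proof.
  induction m; simpl; auto.
  rewrite (flat_map_constant_length (c := length (box m k))).
  - unfold interval. rewrite length_map, length_seq, IHm. reflexivity.
  - intros; rewrite length_map; auto.
Qed.

Definition Cong (N : Z) (f : list Z -> Z) (T : list Z -> Prop) (x : list Z) : Prop :=
  match x with [] => False | z :: t => T t /\ (z - f t) mod N = 0 end.

Definition delta (N u : Z) : nat := if Z.eqb (u mod N) 0 then 1%nat else 0%nat.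

Lemma step_div N v : 0 < N -> v / N - (v - 1) / N = Z.of_nat (delta N v).
Proof.
  intros HN. unfold delta.
  pose proof (Z.div_mod v N ltac:(lia)). pose proof (Z.div_mod (v-1) N ltac:(lia)).
  pose proof (Z.mod_pos_bound v N HN). pose proof (Z.mod_pos_bound (v-1) N HN).
  set (q1 := v / N) in *. set (q0 := (v-1)/N) in *.
  set (r1 := v mod N) in *. set (r0 := (v-1) mod N) in *.
  assert (E : N * (q1 - q0) = 1 + r0 - r1) by lia.
  assert (q1 - q0 = 0 \/ q1 - q0 = 1).
  { destruct (Z_lt_le_dec (q1 - q0) 0). { assert (N * (q1 - q0) <= - N) by nia. lia. }
    destruct (Z_lt_le_dec (q1 - q0) 2). lia. assert (N * (q1 - q0) >= 2 * N) by nia. lia. }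
  destruct (Z.eqb_spec r1 0); simpl.
  - destruct H3; [|lia]. rewrite H3 in E. lia.
  - destruct H3; [lia|]. rewrite H3 in E. lia.
Qed.

Lemma count_seq N s c n : 0 < N ->
  Z.of_nat (sumN (map (fun i => Z.of_nat i - s) (seq 0 n)) (fun z => delta N (z - c)))
  = (Z.of_nat n - s - c - 1) / N - (- s - c - 1) / N.
Proof.
  intros HN. induction n.
  - simpl. lia.
  - rewrite seq_S, map_app, sumN_app, Nat2Z.inj_add, IHn. cbn [map sumN].
    rewrite Nat.add_0_r, Nat.add_0_l.
    pose proof (step_div N (Z.of_nat n - s - c) HN).
    rewrite Nat2Z.inj_succ.
    replace (Z.succ (Z.of_nat n) - s - c - 1) with (Z.of_nat n - s - c) by lia.
    replace (Z.of_nat n - s - c) with (Z.of_nat n - s - c) in * by lia.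
    lia.
Qed.

Lemma count_interval N c k : 0 < N ->
  let L := Z.of_nat (2 * k + 1) in
  L - N < N * Z.of_nat (sumN (interval k) (fun z => delta N (z - c))) < L + N.
Proof.
  intros HN L. unfold interval. rewrite count_seq by auto.
  set (A := Z.of_nat (2 * k + 1) - Z.of_nat k - c - 1).
  set (B := - Z.of_nat k - c - 1).
  pose proof (Z.div_mod A N ltac:(lia)). pose proof (Z.div_mod B N ltac:(lia)).
  pose proof (Z.mod_pos_bound A N HN). pose proof (Z.mod_pos_bound B N HN).
  assert (A - B = L) by (unfold A, B, L; lia).
  rewrite Z.mul_sub_distr_l. lia.
Qed.

Lemma sum_bound {A} (l : list A) (a c : A -> nat) lo hi N :
  (forall x, lo <= N * Z.of_nat (c x) <= hi) ->
  lo * Z.of_nat (sumN l a) <= N * Z.of_nat (sumN l (fun x => a x * c x)%nat)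
  <= hi * Z.of_nat (sumN l a).
Proof.
  intros H. induction l; simpl. lia.
  specialize (H a0). rewrite !Nat2Z.inj_add, Nat2Z.inj_mul.
  assert (0 <= Z.of_nat (a a0)) by lia. nia.
Qed.

Lemma indP_cong N f T z t :
  indP (Cong N f T) (z :: t) = (indP T t * delta N (z - f t))%nat.
Proof.
  unfold indP, delta. simpl.
  destruct (excluded_middle_informative (T t /\ (z - f t) mod N = 0));
  destruct (excluded_middle_informative (T t));
  destruct (Z.eqb_spec ((z - f t) mod N) 0); simpl; tauto || lia.
Qed.

Lemma cong_count m N f T k : 0 < N ->
  (Z.of_nat (2*k+1) - N) * Z.of_nat (count_in_box m T k)
  <= N * Z.of_nat (count_in_box (S m) (Cong N f T) k)
  <= (Z.of_nat (2*k+1) + N) * Z.of_nat (count_in_box m T k).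
Proof.
  intros HN. rewrite !count_eq.
  change (box (S m) k) with (flat_map (fun z => map (cons z) (box m k)) (interval k)).
  rewrite sumN_flat2.
  rewrite (sumN_ext (interval k) _ (fun z => sumN (box m k) (fun t => (indP T t * delta N (z - f t))%nat)))
    by (intros; apply sumN_ext; intros; apply indP_cong).
  rewrite sumN_swap.
  rewrite (sumN_ext (box m k) (fun t => sumN (interval k) (fun z => (indP T t * delta N (z - f t))%nat)) (fun t => (indP T t * sumN (interval k) (fun z => delta N (z - f t)))%nat))
    by (intros; apply sumN_mul).
  apply sum_bound. intros t. pose proof (count_interval N (f t) k HN). simpl in H. lia.
Qed.

Lemma dens_step m N f T nu : 0 < N -> has_density m T nu ->
  has_density (S m) (Cong N f T) (nu / IZR N)%R.
Proof.
  intros HN HT. unfold has_density, Un_cv in *. intros eps He.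
  destruct (HT (eps / 2)%R) as [K1 HK1]; [lra|].
  destruct (archimed (2 / eps)%R) as [Ha _].
  assert (Hup : (0 < 2 / eps)%R) by (unfold Rdiv; apply Rmult_lt_0_compat; [lra| apply Rinv_0_lt_compat; lra]).
  exists (Nat.max K1 (Z.to_nat (up (2 / eps)))). intros k Hk.
  specialize (HK1 k ltac:(lia)). unfold R_dist in *.
  change ((2 * k + 1) ^ S m)%nat with ((2 * k + 1) * (2 * k + 1) ^ m)%nat.
  rewrite mult_INR.
  pose proof (cong_count m N f T k HN) as Hc.
  assert (Htc : (count_in_box m T k <= (2 * k + 1) ^ m)%nat).
  { rewrite count_eq, <- box_length. apply sumN_le_len. intros; unfold indP.
    destruct excluded_middle_informative; lia. }
  assert (HD : (0 < (2 * k + 1) ^ m)%nat) by (apply Nat.neq_0_lt_0, Nat.pow_nonzero; lia).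
  apply (real_core _ (INR (count_in_box m T k))).
  - apply lt_0_INR; auto.
  - apply (le_INR 1). lia.
  - apply (IZR_le 1). lia.
  - split; [apply pos_INR | apply le_INR; auto].
  - rewrite !INR_IZR_INZ. destruct Hc as [Hc1 Hc2]. apply IZR_le in Hc1, Hc2.
    rewrite !mult_IZR, minus_IZR, plus_IZR in *. split; lra.
  - exact HK1.
  - assert (IZR (up (2 / eps)) <= INR (2 * k + 1))%R.
    { rewrite INR_IZR_INZ. apply IZR_le.
      assert (0 < up (2 / eps)). { apply lt_IZR. lra. }
      assert (Z.of_nat (Z.to_nat (up (2/eps))) = up (2 / eps)) by (apply Z2Nat.id; lia).
      lia. }
    set (L := INR (2 * k + 1)) in *.
    assert (L * eps > 2)%R.
    { assert (2 / eps * eps = 2)%R by (field; lra). nra. }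
    assert (0 < L)%R by lra.
    assert (1 / L * L = 1)%R by (field; lra).
    nra.
Qed.

Definition Base0 (x : list Z) : Prop := x = [].

Lemma base_density : has_density 0 Base0 1.
Proof.
  unfold has_density, Un_cv. intros eps He. exists 0%nat. intros k _.
  unfold count_in_box. simpl.
  destruct excluded_middle_informative as [_|n]; [|exfalso; apply n; reflexivity].
  simpl. unfold R_dist. replace (1/1 - 1)%R with 0%R by field. rewrite Rabs_R0. lra.
Qed.

Lemma cong_code m N f T : is_code m T -> is_code (S m) (Cong N f T).
Proof.
  intros H x Hx. destruct x as [|z t]; [destruct Hx|]. destruct Hx as [Ht _].
  unfold point in *. simpl. rewrite (H t Ht). reflexivity.
Qed.

Lemma base_code : is_code 0 Base0.
Proof. intros x Hx; rewrite Hx; reflexivity. Qed.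

Lemma mod_ex a N : 0 < N -> a mod N = 0 -> exists q, a = q * N.
Proof. intros HN H. apply Z.mod_divide in H; [|lia]. exact H. Qed.

Lemma case1 r : 1 <= r -> exists C, diameter_perfect 1 C (2 * r).
Proof.
  intros Hr. exists (Cong (2 * r) (fun _ => 0) Base0). split; [|split].
  - apply cong_code, base_code.
  - split.
    + exists [2 * r], [0]. split; [|split; [|split]].
      * split; [reflexivity|]. rewrite Z.sub_0_r, Z.mod_same; lia.
      * split; [reflexivity|]. reflexivity.
      * intros E. assert (2 * r = 0) by (change (hd 0 [2*r] = hd 0 [0]); rewrite E; reflexivity). lia.
      * unfold da; cbn [pos_sum]. lia.
    + intros x y Hx Hy Hxy.
      destruct x as [|z t]; [destruct Hx|]. destruct Hx as [Ht Hz].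
      destruct y as [|z' t']; [destruct Hy|]. destruct Hy as [Ht' Hz'].
      unfold Base0 in Ht, Ht'. subst.
      apply mod_ex in Hz, Hz'; try lia. destruct Hz as [q Hq]. destruct Hz' as [q' Hq'].
      assert (z <> z') by (intros E; apply Hxy; subst; reflexivity).
      unfold da; cbn [pos_sum].
      assert (q < q' \/ q' < q) as [Hl|Hl] by (destruct (Z.lt_total q q') as [|[|]]; subst; lia).
      * assert ((q' - q) * (2 * r) >= 2 * r) by nia. lia.
      * assert ((q - q') * (2 * r) >= 2 * r) by nia. lia.
  - exists (1 / IZR (2 * r))%R. split.
    + apply dens_step; [lia|]. exact base_density.
    + exists (map (fun i => [Z.of_nat i]) (seq 0 (Z.to_nat (2 * r)))). split.
      * split; [|split].
        -- apply NoDup_map_NoDup_ForallPairs; [|apply seq_NoDup].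
           intros a b _ _ E. injection E; intros; lia.
        -- intros x Hx. apply in_map_iff in Hx. destruct Hx as [i [<- _]]. reflexivity.
        -- intros x y Hx Hy. apply in_map_iff in Hx, Hy.
           destruct Hx as [i [<- Hi]]. destruct Hy as [j [<- Hj]].
           apply in_seq in Hi, Hj. unfold da; cbn [pos_sum]. lia.
      * rewrite length_map, length_seq, INR_IZR_INZ, Z2Nat.id by lia.
        field. apply not_0_IZR. lia.
Qed.

Lemma NoDup_flat {Y} (g : nat -> nat -> Y) (L1 L2 : list nat) :
  NoDup L1 -> NoDup L2 ->
  (forall i j i' j', In i L1 -> In j L2 -> In i' L1 -> In j' L2 -> g i j = g i' j' -> i = i' /\ j = j') ->
  NoDup (flat_map (fun i => map (g i) L2) L1).
Proof.
  intros H1 H2 Hg. induction L1 as [|i L1 IH]; simpl. constructor.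
  inversion H1; subst. apply NoDup_app.
  - apply NoDup_map_NoDup_ForallPairs; auto. intros a b Ha Hb E.
    apply (Hg i a i b); simpl; auto.
  - apply IH; auto. intros; apply Hg; simpl; auto.
  - intros y Hy Hy'. apply in_map_iff in Hy. destruct Hy as [j [<- Hj]].
    apply in_flat_map in Hy'. destruct Hy' as [i' [Hi' Hy']].
    apply in_map_iff in Hy'. destruct Hy' as [j' [E Hj']].
    destruct (Hg i j i' j') as [-> _]; simpl; auto.
Qed.

Definition phi (r : Z) (i j : nat) : list Z :=
  let a := Z.of_nat i in let b := Z.of_nat j in
  if b <? r + 1 + a then [a; r - 1 - a + b] else [r + a; b - (r + 1 + a)].

Lemma phi_hex r i j : (i < Z.to_nat r)%nat -> (j < Z.to_nat (3 * r))%nat ->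
  exists p1 p2, phi r i j = [p1; p2] /\ 0 <= p1 <= 2 * r - 1 /\ 0 <= p2 <= 2 * r - 1 /\
     r - 1 <= p1 + p2 <= 3 * r - 2.
Proof.
  intros Hi Hj. unfold phi. destruct (Z.ltb_spec (Z.of_nat j) (r + 1 + Z.of_nat i)).
  - eexists; eexists; split; [reflexivity|]. lia.
  - eexists; eexists; split; [reflexivity|]. lia.
Qed.

Definition C2 (r : Z) := Cong (3 * r) (fun t => -2 * hd 0 t) (Cong r (fun _ => 0) Base0).

Lemma case2 r : 1 <= r -> exists C, diameter_perfect 2 C (2 * r).
Proof.
  intros Hr. exists (C2 r). split; [|split].
  - apply cong_code, cong_code, base_code.
  - split.
    + exists [r; r], [0; 0]. split; [|split; [|split]].
      * unfold C2; cbn [Cong hd]. split; [split; [reflexivity|]|].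
        -- rewrite Z.sub_0_r, Z.mod_same; lia.
        -- replace (r - -2 * r) with (3 * r) by ring. rewrite Z.mod_same; lia.
      * unfold C2; cbn [Cong hd]. split; [split; [reflexivity|]|]; reflexivity.
      * intros E. assert (r = 0) by (change (hd 0 [r; r] = hd 0 [0; 0]); rewrite E; reflexivity). lia.
      * unfold da; cbn [pos_sum]. lia.
    + intros x y Hx Hy Hxy.
      destruct x as [|x1 [|x2 t]]; [destruct Hx|destruct Hx as [[] _]|].
      destruct y as [|y1 [|y2 t']]; [destruct Hy|destruct Hy as [[] _]|].
      destruct Hx as [[Ht Hx2] Hx1]. destruct Hy as [[Ht' Hy2] Hy1].
      unfold Base0 in Ht, Ht'. subst. cbn [hd] in *.
      apply mod_ex in Hx1, Hx2, Hy1, Hy2; try lia.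
      destruct Hx1 as [q Hq]. destruct Hx2 as [p Hp]. destruct Hy1 as [q' Hq']. destruct Hy2 as [p' Hp'].
      set (B' := p - p'). set (A' := 3 * (q - q') - 2 * B').
      assert (E2 : x2 - y2 = r * B') by (unfold B'; lia).
      assert (E1 : x1 - y1 = r * A') by (unfold A', B'; lia).
      assert (NZ : ~ (A' = 0 /\ B' = 0)).
      { intros [HA HB]. apply Hxy. rewrite HA in E1. rewrite HB in E2.
        assert (x1 = y1) by lia. assert (x2 = y2) by lia. subst; reflexivity. }
      assert (HAB : 2 <= A' \/ A' <= -2 \/ 2 <= B' \/ B' <= -2 \/ 2 <= A' + B' \/ A' + B' <= -2)
        by (unfold A' in *; lia).
      unfold da; cbn [pos_sum].
      destruct HAB as [H|[H|[H|[H|[H|H]]]]].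
      * assert (r * A' >= 2 * r) by nia. lia.
      * assert (r * A' <= - 2 * r) by nia. lia.
      * assert (r * B' >= 2 * r) by nia. lia.
      * assert (r * B' <= - 2 * r) by nia. lia.
      * assert (r * A' + r * B' >= 2 * r) by nia. lia.
      * assert (r * A' + r * B' <= - 2 * r) by nia. lia.
  - exists (1 / IZR r / IZR (3 * r))%R. split.
    + apply dens_step; [lia|]. apply dens_step; [lia|]. exact base_density.
    + exists (flat_map (fun i => map (phi r i) (seq 0 (Z.to_nat (3 * r)))) (seq 0 (Z.to_nat r))).
      split.
      * split; [|split].
        -- apply NoDup_flat; try apply seq_NoDup.
           intros i j i' j' Hi Hj Hi' Hj' E. apply in_seq in Hi, Hj, Hi', Hj'.
           unfold phi in E.
           destruct (Z.ltb_spec (Z.of_nat j) (r + 1 + Z.of_nat i));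
           destruct (Z.ltb_spec (Z.of_nat j') (r + 1 + Z.of_nat i'));
           injection E; intros; lia.
        -- intros x Hx. apply in_flat_map in Hx. destruct Hx as [i [Hi Hx]].
           apply in_map_iff in Hx. destruct Hx as [j [<- Hj]]. apply in_seq in Hi, Hj.
           destruct (phi_hex r i j) as [p1 [p2 [-> _]]]; try lia. reflexivity.
        -- intros x y Hx Hy.
           apply in_flat_map in Hx. destruct Hx as [i [Hi Hx]].
           apply in_map_iff in Hx. destruct Hx as [j [<- Hj]]. apply in_seq in Hi, Hj.
           apply in_flat_map in Hy. destruct Hy as [i' [Hi' Hy]].
           apply in_map_iff in Hy. destruct Hy as [j' [<- Hj']]. apply in_seq in Hi', Hj'.
           destruct (phi_hex r i j) as [p1 [p2 [-> Hp]]]; try lia.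
           destruct (phi_hex r i' j') as [q1 [q2 [-> Hq]]]; try lia.
           unfold da; cbn [pos_sum]. lia.
      * rewrite (flat_map_constant_length (c := Z.to_nat (3 * r))).
        -- rewrite length_seq, mult_INR, !INR_IZR_INZ, !Z2Nat.id by lia.
           field. split; apply not_0_IZR; lia.
        -- intros; rewrite length_map, length_seq; reflexivity.
Qed.

Fixpoint Full (n : nat) : list Z -> Prop :=
  match n with O => Base0 | S n' => Cong 1 (fun _ => 0) (Full n') end.

Lemma Full_iff n x : Full n x <-> length x = n.
Proof.
  revert x; induction n; intros x; destruct x as [|z t]; simpl; unfold Base0.
  - tauto.
  - split; [discriminate|intros H; discriminate].
  - split; [tauto|discriminate].
  - rewrite IHn, Z.mod_1_r. split; [intros [H _]; lia | intros H; split; [lia|reflexivity]].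
Qed.

Lemma Full_density n : has_density n (Full n) 1.
Proof.
  induction n; simpl. exact base_density.
  replace 1%R with (1 / IZR 1)%R by (simpl; field).
  apply dens_step; [lia|exact IHn].
Qed.

Lemma Full_code n : is_code n (Full n).
Proof. intros x Hx. apply Full_iff in Hx. exact Hx. Qed.

Fixpoint Wt (w : Z) (x : list Z) : Z :=
  match x with [] => 0 | a :: x' => w * a + Wt (w + 1) x' end.

Lemma pos_sum_nonneg x y : 0 <= pos_sum x y.
Proof. revert y; induction x; destruct y; simpl; try lia. specialize (IHx y); lia. Qed.

Lemma Wlem : forall x y w, length x = length y ->
  (pos_sum x y = 0 -> pos_sum y x = 0 -> x = y) /\
  (pos_sum x y = 1 -> pos_sum y x = 0 -> w <= Wt w x - Wt w y <= w + Z.of_nat (length x) - 1) /\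
  (pos_sum x y = 0 -> pos_sum y x = 1 -> -(w + Z.of_nat (length x) - 1) <= Wt w x - Wt w y <= - w) /\
  (pos_sum x y = 1 -> pos_sum y x = 1 -> Wt w x - Wt w y <> 0 /\
      -(Z.of_nat (length x) - 1) <= Wt w x - Wt w y <= Z.of_nat (length x) - 1).
Proof.
  induction x as [|a x IH]; intros y w Hl; destruct y as [|b y]; try discriminate.
  - simpl. repeat split; intros; try lia; reflexivity.
  - simpl in Hl. injection Hl as Hl. destruct (IH y (w + 1) Hl) as [I1 [I2 [I3 I4]]].
    pose proof (pos_sum_nonneg x y). pose proof (pos_sum_nonneg y x).
    assert (Ew : Wt w (a :: x) - Wt w (b :: y) = w * (a - b) + (Wt (w+1) x - Wt (w+1) y))
      by (simpl; ring).
    change (pos_sum (a :: x) (b :: y)) with (Z.max (a - b) 0 + pos_sum x y).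
    change (pos_sum (b :: y) (a :: x)) with (Z.max (b - a) 0 + pos_sum y x).
    rewrite Ew. change (length (a :: x)) with (S (length x)). rewrite Nat2Z.inj_succ.
    set (W' := Wt (w+1) x - Wt (w+1) y) in *.
    assert (I0 : pos_sum x y = 0 -> pos_sum y x = 0 -> W' = 0)
      by (intros; unfold W'; rewrite (I1 ltac:(assumption) ltac:(assumption)); ring).
    assert (Hd : a - b = 0 \/ a - b = 1 \/ a - b = -1 \/ a - b >= 2 \/ a - b <= -2) by lia.
    destruct Hd as [Hd|[Hd|[Hd|Hd]]].
    + rewrite Hd, Z.mul_0_r. assert (a = b) by lia. subst b. rewrite Z.sub_diag in *.
      repeat split; intros; try lia. f_equal. apply I1; clear -H1 H2 H H0; lia.
    + rewrite Hd, Z.mul_1_r. repeat split; intros; lia.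
    + rewrite Hd. replace (w * -1) with (- w) by ring. repeat split; intros; lia.
    + repeat split; intros; lia.
Qed.

Lemma Wt_zeros j : forall w l, Wt w (repeat 0 j ++ l) = Wt (w + Z.of_nat j) l.
Proof.
  induction j; intros w l; simpl. f_equal; lia.
  rewrite IHj. rewrite Z.mul_0_r, Z.add_0_l. f_equal. lia.
Qed.

Lemma pos_sum_zeros j l l' : pos_sum (repeat 0 j ++ l) (repeat 0 j ++ l') = pos_sum l l'.
Proof. induction j; simpl; auto. Qed.

Definition C3 (n : nat) := Cong (Z.of_nat (S n) + 1) (fun t => - Wt 2 t) (Full n).

Lemma C3_min j : min_dist (C3 (S (S j))) (2 * 1).
Proof.
  split.
  - exists (1 :: repeat 0 (S j) ++ [1]), (0 :: repeat 0 (S j) ++ [0]).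
    split; [|split; [|split]].
    + split. apply (proj2 (Full_iff _ _)). rewrite length_app, repeat_length. simpl. lia.
      rewrite Wt_zeros. cbn [Wt].
      replace (1 - - ((2 + Z.of_nat (S j)) * 1 + 0)) with (Z.of_nat (S (S (S j))) + 1) by lia.
      apply Z.mod_same. lia.
    + split. apply (proj2 (Full_iff _ _)). rewrite length_app, repeat_length. simpl. lia.
      rewrite Wt_zeros. cbn [Wt]. rewrite Z.mul_0_r. reflexivity.
    + discriminate.
    + unfold da. cbn [pos_sum]. rewrite !pos_sum_zeros. cbn [pos_sum]. lia.
  - intros x y Hx Hy Hxy.
    destruct x as [|z t]; [destruct Hx|]. destruct Hx as [Ht Hz].
    destruct y as [|z' t']; [destruct Hy|]. destruct Hy as [Ht' Hz'].
    apply Full_iff in Ht, Ht'.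
    set (M := Z.of_nat (S (S (S j))) + 1) in *.
    apply mod_ex in Hz, Hz'; try lia. destruct Hz as [q Hq]. destruct Hz' as [q' Hq'].
    destruct (Z_lt_le_dec (da (z :: t) (z' :: t')) (2 * 1)) as [Hlt|]; [exfalso|assumption].
    unfold da in Hlt.
    destruct (Wlem (z :: t) (z' :: t') 1 ltac:(simpl; lia)) as [W1 [W2 [W3 W4]]].
    assert (EW : Wt 1 (z :: t) - Wt 1 (z' :: t') = (q - q') * M).
    { cbn [Wt]. replace (1 + 1) with 2 by reflexivity. rewrite Z.mul_sub_distr_r. lia. }
    rewrite EW in W2, W3, W4.
    change (length (z :: t)) with (S (length t)) in *. rewrite Ht in *.
    pose proof (pos_sum_nonneg (z :: t) (z' :: t')). pose proof (pos_sum_nonneg (z' :: t) (z :: t)).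
    pose proof (pos_sum_nonneg (z' :: t') (z :: t)).
    set (P := pos_sum (z :: t) (z' :: t')) in *. set (Q := pos_sum (z' :: t') (z :: t)) in *.
    assert (HP : P = 0 \/ P = 1) by lia. assert (HQ : Q = 0 \/ Q = 1) by lia.
    assert (HMn : M = Z.of_nat (S (S j)) + 2) by (unfold M; lia).
    clearbody M P Q. set (e := q - q') in *. clearbody e.
    assert (He : e = 0 \/ e >= 1 \/ e <= -1) by lia.
    assert (e >= 1 -> e * M >= M) by (intros; nia).
    assert (e <= -1 -> e * M <= - M) by (intros; nia).
    assert (e = 0 -> e * M = 0) by (intros ->; lia).
    destruct HP as [HP|HP]; destruct HQ as [HQ|HQ].
    + apply Hxy, W1; auto.
    + specialize (W3 HP HQ). lia.
    + specialize (W2 HP HQ). lia.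
    + specialize (W4 HP HQ). lia.
Qed.

Fixpoint sumZ (l : list nat) (g : nat -> Z) : Z :=
  match l with [] => 0 | a :: l' => g a + sumZ l' g end.

Lemma pos_sum_map (f g : nat -> Z) l :
  pos_sum (map f l) (map g l) = sumZ l (fun a => Z.max (f a - g a) 0).
Proof. induction l; simpl; auto. rewrite IHl; reflexivity. Qed.

Lemma sumZ_le l g h : (forall a, g a <= h a) -> sumZ l g <= sumZ l h.
Proof. intros H; induction l; simpl; auto. lia. specialize (H a); lia. Qed.

Lemma ind_sum i n : forall s,
  sumZ (seq s n) (fun a => if Nat.eqb a i then 1 else 0) <= 1 /\
  ((i < s)%nat -> sumZ (seq s n) (fun a => if Nat.eqb a i then 1 else 0) = 0).
Proof.
  induction n; intros s; simpl. lia.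
  destruct (IHn (S s)) as [H1 H2].
  destruct (Nat.eqb_spec s i).
  - subst. rewrite H2 by lia. split; intros; lia.
  - split; [lia|]. intros. rewrite H2 by lia. reflexivity.
Qed.

Lemma sum0 l : sumZ l (fun _ => 0) = 0.
Proof. induction l; simpl; auto. Qed.

Lemma map_seq_inj (h1 h2 : nat -> Z) m : forall s,
  map h1 (seq s m) = map h2 (seq s m) -> forall i, (s <= i < s + m)%nat -> h1 i = h2 i.
Proof.
  induction m; intros s E i Hi; [lia|]. simpl in E. injection E as E1 E2.
  destruct (Nat.eq_dec i s). subst; auto. apply (IHm (S s)); auto; lia.
Qed.

Definition unitv (m i : nat) : list Z := map (fun a => if Nat.eqb a i then 1 else 0) (seq 0 m).
Definition zerov (m : nat) : list Z := map (fun _ => 0) (seq 0 m).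
Definition S3 (m : nat) := zerov m :: map (unitv m) (seq 0 m).

Lemma S3_char m x : In x (S3 m) -> exists h, x = map h (seq 0 m) /\
   (forall a, 0 <= h a <= 1) /\ sumZ (seq 0 m) h <= 1.
Proof.
  intros [<-|Hx].
  - exists (fun _ => 0). split; [reflexivity|]. split; [intros; lia|]. rewrite sum0; lia.
  - apply in_map_iff in Hx. destruct Hx as [i [<- _]].
    exists (fun a => if Nat.eqb a i then 1 else 0). split; [reflexivity|]. split.
    + intros a; destruct (Nat.eqb a i); lia.
    + apply (ind_sum i m 0).
Qed.

Lemma S3_anticode m : finite_anticode m (S3 m) 1.
Proof.
  split; [|split].
  - constructor.
    + intros Hin. apply in_map_iff in Hin. destruct Hin as [i [E Hi]]. apply in_seq in Hi.
      unfold unitv, zerov in E. pose proof (map_seq_inj _ _ m 0 E i ltac:(lia)) as Hc.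
      simpl in Hc. rewrite Nat.eqb_refl in Hc. discriminate.
    + apply NoDup_map_NoDup_ForallPairs; [|apply seq_NoDup].
      intros a b Ha _ E. apply in_seq in Ha. unfold unitv in E.
      pose proof (map_seq_inj _ _ m 0 E a ltac:(lia)) as Hc. simpl in Hc.
      rewrite Nat.eqb_refl in Hc. destruct (Nat.eqb_spec a b); auto. discriminate.
  - intros x Hx. destruct (S3_char m x Hx) as [h [-> _]].
    unfold point. rewrite length_map, length_seq. reflexivity.
  - intros x y Hx Hy. destruct (S3_char m x Hx) as [h [-> [Hh Hs]]].
    destruct (S3_char m y Hy) as [h' [-> [Hh' Hs']]].
    unfold da. rewrite !pos_sum_map.
    assert (sumZ (seq 0 m) (fun a => Z.max (h a - h' a) 0) <= sumZ (seq 0 m) h)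
      by (apply sumZ_le; intros a; specialize (Hh a); specialize (Hh' a); lia).
    assert (sumZ (seq 0 m) (fun a => Z.max (h' a - h a) 0) <= sumZ (seq 0 m) h')
      by (apply sumZ_le; intros a; specialize (Hh a); specialize (Hh' a); lia).
    lia.
Qed.

Lemma case3 m : (3 <= m)%nat -> exists C, diameter_perfect m C (2 * 1).
Proof.
  intros Hm. destruct m as [|[|[|j]]]; try lia.
  exists (C3 (S (S j))). split; [|split].
  - apply cong_code, Full_code.
  - apply C3_min.
  - exists (1 / IZR (Z.of_nat (S (S (S j))) + 1))%R. split.
    + apply dens_step; [lia|]. apply Full_density.
    + exists (S3 (S (S (S j)))). split.
      * apply S3_anticode.
      * unfold S3. simpl length. rewrite length_map, length_seq.
        rewrite INR_IZR_INZ. rewrite (Nat2Z.inj_succ (S (S (S j)))).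
        unfold Z.succ. field. apply not_0_IZR. lia.
Qed.


Theorem mainTheorem12 (m : nat) (r : Z) :
  (((m = 1%nat \/ m = 2%nat) /\ 1 <= r) \/ ((3 <= m)%nat /\ r = 1)) ->
  exists C : list Z -> Prop, diameter_perfect m C (2 * r).
Proof.
  intros [[[-> | ->] Hr] | [Hm ->]].
  - apply case1; auto.
  - apply case2; auto.
  - apply case3; auto.
Qed.
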